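(* Let $I=[0,1]$ and $I'=[0',1']$ be two copies of the unit interval, and let $f\colon I\sqcup I'\to I$ be any continuous map with $f(0)=f(0')=0$ and $f(1)=f(1')=1$. Then $(0,0')$ and $(1,1')$ belong to the same connected component of $\Sigma_f$.
   Context: $\Sigma_f=\{(x,y)\in (I\sqcup I')^2: x\ne y,\ f(x)=f(y)\}$. *)

(* Defs.v *)
From HB Require Import structures.
From mathcomp Require Import all_boot all_order all_algebra.
From mathcomp Require Import all_classical all_reals all_analysis.
Set Implicit Arguments. Unset Strict Implicit. Unset Printing Implicit Defensive.
Import Order.TTheory GRing.Theory Num.Theory.
Import numFieldNormedType.Exports.
Local Open Scope classical_set_scope.
Local Open Scope ring_scope.

(* The disjoint union I ⊔ I' of two copies of [0,1] is modelled as the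
   subspace [set p | p.2 \in [0,1]] of bool * R (bool discrete, product
   topology): (false, x) is x ∈ I and (true, x) is x' ∈ I'. *)
Definition IU (R : realType) : set (bool * R) :=
  [set p | p.2 \in `[0, 1]%R].

Definition Sigma (R : realType) (f : bool * R -> R) : set ((bool * R) * (bool * R)) :=
  [set p | @IU R p.1 /\ @IU R p.2 /\ p.1 <> p.2 /\ f p.1 = f p.2].

(* Main.v *)
Require Import Defs.
From HB Require Import structures.
From mathcomp Require Import all_boot all_order all_algebra.
From mathcomp Require Import all_classical all_reals all_analysis.
From mathcomp Require Import ring lra.
Import Order.TTheory GRing.Theory Num.Theory.
Import numFieldNormedType.Exports.
Local Open Scope classical_set_scope.
Local Open Scope ring_scope.
Set Implicit Arguments. Unset Strict Implicit. Unset Printing Implicit Defensive.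

Inductive reach {R : numDomainType} {T : pseudoMetricType R}
  (K : set T) (e : R) (a : T) : T -> Prop :=
| reach0 : reach K e a a
| reachS x y : reach K e a x -> K y -> ball x e y -> reach K e a y.

Lemma reach_mono {R : numDomainType} {T : pseudoMetricType R} (K : set T) e1 e2 a y :
  e1 <= e2 -> reach K e1 a y -> reach K e2 a y.
Proof.
move=> le; elim=> [|x z _ IH Kz bxz]; first exact: reach0.
by apply: reachS IH Kz _; exact: (le_ball le).
Qed.

Lemma reachK {R : numDomainType} {T : pseudoMetricType R} (K : set T) e a y :
  K a -> reach K e a y -> K y.
Proof. by move=> Ka; elim. Qed.

Lemma sep_compact {R : realType} {T : pseudoMetricType R} (P Q : set T) :
  compact P -> closed Q -> P `&` Q = set0 ->
  exists2 e : R, 0 < e & forall p q, P p -> Q q -> ~ ball p e q.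
Proof.
move=> cP cQ PQ0; apply: contrapT => Hn.
have H : forall e : R, 0 < e -> exists p, P p /\ exists q, Q q /\ ball p e q.
  move=> e e0; apply: contrapT => Hne; apply: Hn; exists e => // p q Pp Qq bpq.
  by apply: Hne; exists p; split=> //; exists q.
pose B := fun e : R => [set p | P p /\ exists q, Q q /\ ball p e q].
have FF : Filter (filter_from [set e : R | 0 < e] B).
  apply: filter_from_filter; first by exists 1; rewrite /= ltr01.
  move=> i j /= i0 j0; exists (Order.min i j); first by rewrite /= lt_min i0 j0.
  move=> p [Pp [q [Qq bpq]]]; split; split=> //; exists q; split => //.
    by apply: (le_ball _ bpq); rewrite ge_min lexx.
  by apply: (le_ball _ bpq); rewrite ge_min lexx orbT.
have PF : ProperFilter (filter_from [set e : R | 0 < e] B).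
  apply: filter_from_proper => e /= e0; have [p [Pp [q [Qq bpq]]]] := H e e0.
  by exists p; split=> //; exists q.
have [|p [Pp clp]] := cP _ PF; first by exists 1; [rewrite /= ltr01|move=> p []].
have Qp : Q p.
  apply: cQ => U /nbhs_ballP [e /= e0 beU].
  have e20 : 0 < e / 2 by rewrite divr_gt0.
  have FB : filter_from [set e : R | 0 < e] B (B (e/2)) by exists (e/2).
  have [p' [[Pp' [q [Qq bq]]] bp]] := clp (B (e/2)) (ball p (e/2))
     FB (nbhsx_ballx p _ e20).
  exists q; split=> //; apply: beU.
  by rewrite (splitr e); exact: (ball_triangle bp bq).
by move: PQ0; rewrite -subset0 => /(_ p); apply.
Qed.

Lemma reach_exit {R : numDomainType} {T : pseudoMetricType R} (K W : set T) e a y :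
  W a -> reach K e a y -> ~ W y ->
  exists z, K z /\ ~ W z /\ exists x, W x /\ reach K e a x /\ ball x e z.
Proof.
move=> Wa; elim=> [|x z rx IH Kz bxz nWz]; first by [].
have [Wx|nWx] := pselect (W x); last exact: IH.
by exists z; split=> //; split=> //; exists x.
Qed.

Lemma reach_inner {R : realType} {T : pseudoMetricType R} (K : set T) a (P Q : set T) :
  compact K -> compact P -> closed Q -> P `&` Q = set0 ->
  (forall y, K y -> (forall e, 0 < e -> reach K e a y) -> P y \/ Q y) ->
  P a -> forall q, Q q -> (forall e, 0 < e -> reach K e a q) -> False.
Proof.
move=> cK cP cQ PQ0 CPQ Pa q Qq rq.
have [e0 e00 sep] := sep_compact cP cQ PQ0.
have e020 : 0 < e0 / 2 by rewrite divr_gt0.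
have e040 : 0 < e0 / 4 by rewrite divr_gt0.
pose W := [set x | exists p, P p /\ ball p (e0/2) x].
have Wa : W a by exists a; split=> //; exact: ballxx.
have nWq : ~ W q.
  move=> [p [Pp bpq]]; apply: (sep p q Pp Qq); apply: (le_ball _ bpq).
  lra.
pose E := fun e : R => [set z | K z /\ ~ W z /\
   exists x, W x /\ reach K e a x /\ ball x e z].
have FF : Filter (filter_from [set e : R | 0 < e] E).
  apply: filter_from_filter; first by exists 1; rewrite /= ltr01.
  move=> i j /= i0 j0; exists (Order.min i j); first by rewrite /= lt_min i0 j0.
  move=> z [Kz [nWz [x [Wx [rx bxz]]]]]; split; split=> //; split=> //;
    exists x; split=> //; split.
  - by apply: reach_mono rx; rewrite ge_min lexx.
  - by apply: (le_ball _ bxz); rewrite ge_min lexx.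
  - by apply: reach_mono rx; rewrite ge_min lexx orbT.
  - by apply: (le_ball _ bxz); rewrite ge_min lexx orbT.
have PF : ProperFilter (filter_from [set e : R | 0 < e] E).
  apply: filter_from_proper => e /= ep.
  have [z Hz] := reach_exit Wa (rq e ep) nWq; by exists z.
have [|z [Kz clz]] := cK _ PF.
  by exists 1; [rewrite /= ltr01|move=> z []].
have getE : forall e d, 0 < e -> 0 < d -> exists z', E e z' /\ ball z d z'.
  move=> e d ep d0.
  have FE : filter_from [set e : R | 0 < e] E (E e) by exists e.
  have [z' [Ez' bz']] := clz (E e) (ball z d) FE (nbhsx_ballx z _ d0).
  by exists z'.
have rz : forall e, 0 < e -> reach K e a z.
  move=> e ep; have e20 : 0 < e / 2 by rewrite divr_gt0.
  have [z' [[Kz' [_ [x [_ [rx bxz']]]]] bzz']] := getE _ _ e20 e20.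
  have rz' : reach K (e/2) a z' by exact: reachS rx Kz' bxz'.
  apply: reachS (reach_mono _ rz') Kz _.
    lra.
  apply: (le_ball _ (ball_sym bzz')).
  lra.
have [Pz|Qz] := CPQ z Kz rz.
  have [z' [[_ [nWz' _]] bzz']] := getE _ _ ltr01 e020.
  by apply: nWz'; exists z.
have [z' [[_ [_ [x [[p [Pp bpx]] [_ bxz']]]]] bzz']] := getE _ _ e040 e040.
apply: (sep p z Pp Qz).
have -> : e0 = e0 / 2 + e0 / 4 + e0 / 4.
  by field.
exact: ball_triangle (ball_triangle bpx bxz') (ball_sym bzz').
Qed.

Lemma reach_component {R : realType} {T : pseudoMetricType R} (K : set T) a b :
  closed K -> compact K -> K a -> (forall e, 0 < e -> reach K e a b) ->
  connected_component K a b.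
Proof.
move=> clK cK Ka rb.
pose C := [set y | K y /\ forall e, 0 < e -> reach K e a y].
have Ca : C a by split=> // e _; exact: reach0.
have Cb : C b by split=> //; exact: reachK Ka (rb 1 ltr01).
have clC : closed C.
  move=> z clz; split.
    by apply: clK; apply: (closureS _ clz) => y [].
  move=> e ep; have e20 : 0 < e / 2 by rewrite divr_gt0.
  have [w [[Kw rw] bzw]] := clz _ (nbhsx_ballx z _ e20).
  apply: reachS (reach_mono _ (rw _ e20)) _ _.
  - lra.
  - by apply: clK; apply: (closureS _ clz) => y [].
  - by apply: (le_ball _ (ball_sym bzw)); lra.
have CK : C `<=` K by move=> y [].
have cC : compact C by exact: subclosed_compact clC cK CK.
exists C => //; split => //.
move=> B [b0 Bb0] [Op oO BO] [Fp cF BF].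
have BC : B `<=` C by rewrite BO => y [].
apply/seteqP; split=> // y Cy; apply: contrapT => nBy.
have clCF : closed (C `&` Fp) by exact: closedI.
have clCO : closed (C `&` ~` Op) by apply: closedI => //; exact: open_closedC.
have [Ba|nBa] := pselect (B a).
- have h1 : compact (C `&` Fp).
    by apply: subclosed_compact clCF cK _ => x [[]].
  have h3 : (C `&` Fp) `&` (C `&` ~` Op) = set0.
    rewrite -subset0 => x [[Cx Fx] [_ nOx]]; apply: nOx.
    have : B x by rewrite BF.
    by rewrite BO => -[].
  have h4 : forall x, K x -> (forall e, 0 < e -> reach K e a x) ->
      (C `&` Fp) x \/ (C `&` ~` Op) x.
    move=> x Kx rx; have [Bx|nBx] := pselect (B x).
      by left; rewrite -BF.
    right; split; first by split.
    by move=> Ox; apply: nBx; rewrite BO.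
  have h5 : (C `&` Fp) a by rewrite -BF.
  have h6 : (C `&` ~` Op) y by split=> // Oy; apply: nBy; rewrite BO.
  exact: (reach_inner cK h1 clCO h3 h4 h5 h6 (proj2 Cy)).
- have [Cb0 _] : (C `&` Fp) b0 by rewrite -BF.
  have h1 : compact (C `&` ~` Op).
    by apply: subclosed_compact clCO cK _ => x [[]].
  have h3 : (C `&` ~` Op) `&` (C `&` Fp) = set0.
    rewrite -subset0 => x [[Cx nOx] [_ Fx]]; apply: nOx.
    have : B x by rewrite BF.
    by rewrite BO => -[].
  have h4 : forall x, K x -> (forall e, 0 < e -> reach K e a x) ->
      (C `&` ~` Op) x \/ (C `&` Fp) x.
    move=> x Kx rx; have [Bx|nBx] := pselect (B x).
      by right; rewrite -BF.
    left; split; first by split.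
    by move=> Ox; apply: nBx; rewrite BO.
  have h5 : (C `&` ~` Op) a by split=> // Oa; apply: nBa; rewrite BO.
  have h6 : (C `&` Fp) b0 by rewrite -BF.
  exact: (reach_inner cK h1 clCF h3 h4 h5 h6 (proj2 Cb0)).
Qed.
Lemma even_inv (T : finType) (A : {set T}) (f : T -> T) :
  (forall x, x \in A -> [/\ f x \in A, f (f x) = x & f x != x]) -> ~~ odd #|A|.
Proof.
move: {2}#|A| (leqnn #|A|) => n; elim: n A => [|n IH] A.
  by rewrite leqn0 => /eqP ->.
move=> leA H; have [->|[x xA]] := set_0Vmem A; first by rewrite cards0.
have [fxA ffx fxx] := H x xA.
have fxA' : f x \in A :\ x by rewrite in_setD1 fxx.
rewrite (cardsD1 x A) xA (cardsD1 (f x) (A :\ x)) fxA' !add1n /= negbK.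
have le' : (#|A :\ x :\ f x| <= n)%N.
  move: leA; rewrite (cardsD1 x A) xA (cardsD1 (f x) (A :\ x)) fxA'.
  by rewrite !add1n ltnS => /ltnW.
apply: IH le' _ => y; rewrite !in_setD1 => /and3P [yfx yx yA].
have [fyA ffy fyy] := H y yA; split=> //.
rewrite fyA andbT; apply/andP; split.
  by apply: contraNneq yx => /(congr1 f); rewrite ffy ffx => ->.
by apply: contraNneq yfx => <-; rewrite ffy.
Qed.


Notation cell M := ('I_M.+1 * 'I_M.+1)%type.
Notation dir := (bool * bool)%type.

Definition chg (sg : nat -> nat -> bool) (M : nat) (c : cell M) (d : dir) : bool :=
  let i := nat_of_ord c.1 in let j := nat_of_ord c.2 in
  match d with
  | (true, true) => sg i.+1 j != sg i.+1 j.+1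
  | (true, false) => sg i j != sg i j.+1
  | (false, true) => sg i j.+1 != sg i.+1 j.+1
  | (false, false) => sg i j != sg i.+1 j
  end.

Definition exd (M : nat) (c : cell M) (d : dir) : bool :=
  match d with
  | (true, true) => (c.1 < M)%N
  | (true, false) => (0 < c.1)%N
  | (false, true) => (c.2 < M)%N
  | (false, false) => (0 < c.2)%N
  end.

Definition nb (M : nat) (c : cell M) (d : dir) : cell M :=
  match d with
  | (true, true) => (inord c.1.+1, c.2)
  | (true, false) => (inord c.1.-1, c.2)
  | (false, true) => (c.1, inord c.2.+1)
  | (false, false) => (c.1, inord c.2.-1)
  end.

Arguments nb : simpl never.

Definition valid sg M (c : cell M) (d : dir) := exd c d && chg sg c d.

Definition Erel sg M : rel (cell M) :=
  fun c c' => [exists d : dir, valid sg c d && (nb c d == c')].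

Definition opp (d : dir) : dir := (d.1, ~~ d.2).

Lemma valid_inv sg M (c : cell M) d : valid sg c d ->
  valid sg (nb c d) (opp d) /\ nb (nb c d) (opp d) = c.
Proof.
case: c => i j; case: d => [[] []]; rewrite /valid /nb /= => /andP [ex ch].
- have e : (nat_of_ord (inord i.+1 : 'I_M.+1)) = i.+1 by rewrite inordK.
  rewrite /chg /= e /= ch; split=> //.
  by rewrite inord_val.
- have e : (nat_of_ord (inord i.-1 : 'I_M.+1)) = i.-1.
    by rewrite inordK // (leq_ltn_trans (leq_pred _)).
  rewrite /chg /= e prednK //; move: ch; rewrite /chg /= => ->.
  rewrite andbT inord_val; split=> //.
  exact: ltn_ord i.
- have e : (nat_of_ord (inord j.+1 : 'I_M.+1)) = j.+1 by rewrite inordK.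
  rewrite /chg /= e /= ch; split=> //.
  by rewrite inord_val.
- have e : (nat_of_ord (inord j.-1 : 'I_M.+1)) = j.-1.
    by rewrite inordK // (leq_ltn_trans (leq_pred _)).
  rewrite /chg /= e prednK //; move: ch; rewrite /chg /= => ->.
  rewrite andbT inord_val; split=> //.
  exact: ltn_ord j.
Qed.

Definition sg_ok (sg : nat -> nat -> bool) (M : nat) :=
  [/\ forall j, (j <= M.+1)%N -> sg M.+1 j = true,
      forall i, (i <= M.+1)%N -> sg i 0%N = true,
      forall j, (j <= M.+1)%N -> sg 0%N j = (j == 0%N) &
      forall i, (i <= M.+1)%N -> sg i M.+1 = (i == M.+1)].

Lemma deg_parity sg M (c : cell M) : sg_ok sg M ->
  valid sg c (true, true) (+) valid sg c (true, false) (+)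
  (valid sg c (false, true) (+) valid sg c (false, false)) =
  ((c.1 == 0 :> nat) && (c.2 == 0 :> nat)) (+) ((c.1 == M :> nat) && (c.2 == M :> nat)).
Proof.
case=> HR HD HL HU; case: c => [[i Hi] [j Hj]]; rewrite /valid /exd /chg /=.
have vR : (i < M)%N && (sg i.+1 j != sg i.+1 j.+1) = (sg i.+1 j != sg i.+1 j.+1).
  case: ltnP => //= iM; have -> : i = M by apply/eqP; rewrite eqn_leq iM -ltnS Hi.
  by rewrite (HR j) ?(HR j.+1) // ltnW.
have vD : (0 < j)%N && (sg i j != sg i.+1 j) = (sg i j != sg i.+1 j).
  have [->|jp] := posnP j; last by [].
  by rewrite /= (HD i) ?(HD i.+1) // ltnW.
have vL : (0 < i)%N && (sg i j != sg i j.+1) =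
     (sg i j != sg i j.+1) (+) (i == 0%N) && (j == 0%N).
  have [->|ip] := posnP i; last by rewrite addbF.
  rewrite /= (HL j (ltnW Hj)) (HL j.+1 Hj) /=.
  by case: (j == 0%N).
have vU : (j < M)%N && (sg i j.+1 != sg i.+1 j.+1) =
     (sg i j.+1 != sg i.+1 j.+1) (+) (i == M) && (j == M).
  case: ltnP => jM /=.
    by rewrite (ltn_eqF jM) andbF addbF.
  have -> : j = M by apply/eqP; rewrite eqn_leq jM -ltnS Hj.
  rewrite (HU i (ltnW Hi)) (HU i.+1 Hi) eqxx andbT eqSS (ltn_eqF Hi).
  by case: (i == M).
rewrite vR vD vL vU.
move: (sg i j) (sg i.+1 j) (sg i j.+1) (sg i.+1 j.+1) => a b c d.
by case: a; case: b; case: c; case: d; case: (_ && _); case: (_ && _).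
Qed.

Lemma xor_dir (G : dir -> bool) :
  \big[addb/false]_(d : dir) G d =
  G (true, true) (+) G (true, false) (+) (G (false, true) (+) G (false, false)).
Proof.
transitivity (\big[addb/false]_(p : bool * bool) G (p.1, p.2)).
  by apply: eq_bigr => -[].
rewrite -(pair_bigA _ (fun x y => G (x, y))) /= big_bool.
by rewrite !big_bool.
Qed.

Lemma grid_connect sg M : sg_ok sg M ->
  connect (@Erel sg M) (ord0, ord0) (ord_max, ord_max).
Proof.
move=> ok; set c0 : cell M := (ord0, ord0); set c1 : cell M := (ord_max, ord_max).
apply: contraT => nc1.
set E := @Erel sg M.
pose S : {set cell M} := [set c | connect E c0 c]%SET.
pose H : {set cell M * dir} := [set h : cell M * dir | valid sg h.1 h.2 && (h.1 \in S)]%SET.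
have ev : ~~ odd #|H|.
  apply: (@even_inv _ H (fun h => (nb h.1 h.2, opp h.2))) => -[c d].
  rewrite inE /= => /andP [v cS]; have [v' nn] := valid_inv v.
  split.
  - rewrite inE /= v' /=; rewrite /S !inE in cS *.
    apply: connect_trans cS (connect1 _).
    by apply/existsP; exists d; rewrite v eqxx.
  - by rewrite nn; case: d {v v' nn} => a b; rewrite /opp /= negbK.
  - by apply/eqP => -[_]; case: d {v v' nn} => a [].
have percell : forall c : cell M,
    \big[addb/false]_(d : dir) odd (valid sg c d && (c \in S)) =
    (c == c0) && (c0 \in S) (+) (c == c1) && (c1 \in S).
  move=> c; rewrite xor_dir !oddb.
  have [cS|ncS] := boolP (c \in S); last first.
    rewrite !andbF /=.
    have -> : (c == c0) && (c0 \in S) = false.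
      by apply/negbTE; apply: contra ncS => /andP [/eqP ->].
    have -> : (c == c1) && (c1 \in S) = false.
      by apply/negbTE; apply: contra ncS => /andP [/eqP ->].
    by [].
  rewrite !andbT deg_parity //.
  have -> : c0 \in S by rewrite inE connect0.
  have -> : (c == c1) && (c1 \in S) = (c == c1) by case: eqP => // <-.
  rewrite andbT.
  by case: c {cS} => i j; rewrite /c0 /c1 !xpair_eqE.
have od : odd #|H|.
  rewrite /H -sum1dep_card big_mkcond /=.
  rewrite (eq_bigr (fun h => nat_of_bool (valid sg h.1 h.2 && (h.1 \in S)))); last first.
    by move=> h _; case: (_ && _).
  rewrite -(pair_bigA _ (fun c d => nat_of_bool (valid sg c d && (c \in S)))).
  rewrite (big_morph odd oddD (id2 := 0%N) (erefl false)).
  under eq_bigr => c _ do rewrite (big_morph odd oddD (id2 := 0%N) (erefl false)) percell.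
  rewrite big_split /=.
  rewrite -!(big_mkcond (fun c => c == _)) /= !big_pred1_eq.
  by rewrite inE connect0 /= inE.
by rewrite od in ev.
Qed.

Definition pt (R : realType) (N i : nat) : R := i%:R / N%:R.

Definition sgf (R : realType) (g h : R -> R) (N : nat) (i j : nat) : bool :=
  (h (pt R N j) < g (pt R N i)) ||
  ((g (pt R N i) == h (pt R N j)) && ((j == 0)%N || (i == N)%N)).

Definition fn_ok (R : realType) (g : R -> R) :=
  [/\ {within `[0, 1], continuous g},
      (forall s, s \in `[0, 1] -> g s \in `[0, 1]), g 0 = 0 & g 1 = 1].

Lemma pt_in (R : realType) N i : (0 < N)%N -> (i <= N)%N -> pt R N i \in `[0, 1].
Proof.
move=> N0 iN; rewrite in_itv /= /pt divr_ge0 ?ler0n //=.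
by rewrite ler_pdivrMr ?ltr0n // mul1r ler_nat.
Qed.

Lemma pt0 (R : realType) N : pt R N 0 = 0.
Proof. by rewrite /pt mul0r. Qed.

Lemma ptN (R : realType) N : (0 < N)%N -> pt R N N = 1.
Proof. by move=> N0; rewrite /pt divff // pnatr_eq0 -lt0n. Qed.

Lemma ptS (R : realType) N i : (0 < N)%N -> pt R N i.+1 = pt R N i + 1 / N%:R.
Proof. by move=> N0; rewrite /pt -mulrDl -natr1. Qed.

Lemma sgf_true (R : realType) g h N i j : @sgf R g h N i j ->
  h (pt R N j) <= g (pt R N i).
Proof. by case/orP => [/ltW //| /andP [/eqP -> _]]. Qed.

Lemma sgf_false (R : realType) g h N i j : ~~ @sgf R g h N i j ->
  g (pt R N i) <= h (pt R N j).
Proof. by rewrite negb_or => /andP [+ _]; rewrite -leNgt. Qed.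

Lemma sgf_ok (R : realType) g h M : fn_ok g -> fn_ok h -> sg_ok (@sgf R g h M.+1) M.
Proof.
move=> [cg rg g0 g1] [ch rh h0 h1].
have hle : forall j, (j <= M.+1)%N -> 0 <= h (pt R M.+1 j) <= 1.
  by move=> j jN; have := rh _ (pt_in R (ltn0Sn M) jN); rewrite in_itv.
have gle : forall i, (i <= M.+1)%N -> 0 <= g (pt R M.+1 i) <= 1.
  by move=> i iN; have := rg _ (pt_in R (ltn0Sn M) iN); rewrite in_itv.
split.
- move=> j jN; rewrite /sgf ptN // g1 eqxx orbT andbT.
  by have /andP [_] := hle j jN; rewrite le_eqVlt => /orP [/eqP ->|->]; rewrite ?eqxx ?orbT.
- move=> i iN; rewrite /sgf pt0 h0 eqxx /= andbT.
  by have /andP [+ _] := gle i iN; rewrite le_eqVlt => /orP [/eqP <-|->]; rewrite ?eqxx ?orbT.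
- move=> j jN; rewrite /sgf pt0 g0 /=.
  have /andP [h0j _] := hle j jN; rewrite ltNge h0j /=.
  case: (posnP j) => [->|jp]; first by rewrite pt0 h0 eqxx.
  by rewrite andbF.
- move=> i iN; rewrite /sgf ptN // h1 /=.
  have /andP [_ gi1] := gle i iN; rewrite ltNge gi1 /=.
  case: (eqVneq i M.+1) => [->|iN']; first by rewrite ptN // g1 eqxx.
  by rewrite andbF.
Qed.

Lemma ivt_edge (R : realType) (h : R -> R) a b v : a <= b ->
  {within `[0, 1], continuous h} -> a \in `[0, 1] -> b \in `[0, 1] ->
  (h a <= v <= h b) \/ (h b <= v <= h a) -> exists2 t, t \in `[a, b] & h t = v.
Proof.
move=> ab ch a01 b01 hv; apply: IVT => //.
  apply: continuous_subspaceW ch => x /=; rewrite !in_itv /= => /andP [ax xb].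
  move: a01 b01; rewrite !in_itv /= => /andP [a0 _] /andP [_ b1].
  by rewrite (le_trans a0 ax) (le_trans xb b1).
rewrite ge_min le_max.
by case: hv => /andP [-> ->]; rewrite ?orbT.
Qed.

Lemma pt_le (R : realType) N i : (0 < N)%N -> pt R N i <= pt R N i.+1.
Proof. by move=> N0; rewrite ptS // lerDl divr_ge0 ?ler0n. Qed.

Lemma vert_edge (R : realType) g h N k j : (0 < N)%N -> fn_ok g -> fn_ok h ->
  (k <= N)%N -> (j < N)%N -> @sgf R g h N k j != sgf g h N k j.+1 ->
  exists2 t, t \in `[pt R N j, pt R N j.+1] & h t = g (pt R N k).
Proof.
move=> N0 [cg rg g0 g1] [ch rh h0 h1] kN jN ne.
apply: ivt_edge (pt_le _ _ N0) ch (pt_in _ N0 (ltnW jN)) (pt_in _ N0 jN) _.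
move: ne; case E1: (sgf g h N k j); case E2: (sgf g h N k j.+1) => // _.
- have := sgf_true E1; have := @sgf_false _ g h N k j.+1; rewrite E2 => /(_ erefl).
  by move=> a b; left; rewrite a b.
- have := sgf_true E2; have := @sgf_false _ g h N k j; rewrite E1 => /(_ erefl).
  by move=> a b; right; rewrite a b.
Qed.

Lemma horiz_edge (R : realType) g h N i k : (0 < N)%N -> fn_ok g -> fn_ok h ->
  (i < N)%N -> (k <= N)%N -> @sgf R g h N i k != sgf g h N i.+1 k ->
  exists2 s, s \in `[pt R N i, pt R N i.+1] & g s = h (pt R N k).
Proof.
move=> N0 [cg rg g0 g1] [ch rh h0 h1] iN kN ne.
apply: ivt_edge (pt_le _ _ N0) cg (pt_in _ N0 (ltnW iN)) (pt_in _ N0 iN) _.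
move: ne; case E1: (sgf g h N i k); case E2: (sgf g h N i.+1 k) => // _.
- have := sgf_true E1; have := @sgf_false _ g h N i.+1 k; rewrite E2 => /(_ erefl).
  by move=> a b; right; rewrite a b.
- have := sgf_true E2; have := @sgf_false _ g h N i k; rewrite E1 => /(_ erefl).
  by move=> a b; left; rewrite a b.
Qed.

Definition cellset (R : realType) M (c : cell M) : set (R * R) :=
  [set p | pt R M.+1 c.1 <= p.1 <= pt R M.+1 c.1.+1 /\
           pt R M.+1 c.2 <= p.2 <= pt R M.+1 c.2.+1].

Definition KK (R : realType) (g h : R -> R) : set (R * R) :=
  [set p | p.1 \in `[0, 1] /\ p.2 \in `[0, 1] /\ g p.1 = h p.2].

Lemma seg_in (R : realType) M j t : (j < M.+1)%N ->
  t \in `[pt R M.+1 j, pt R M.+1 j.+1] -> t \in `[0, 1].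
Proof.
move=> jM; rewrite !in_itv /= => /andP [t1 t2].
have := pt_in R (ltn0Sn M) (ltnW jM); rewrite in_itv /= => /andP [a _].
have := pt_in R (ltn0Sn M) jM; rewrite in_itv /= => /andP [_ b].
by rewrite (le_trans a t1) (le_trans t2 b).
Qed.

Lemma valid_pt (R : realType) g h M (c : cell M) d : fn_ok g -> fn_ok h ->
  valid (@sgf R g h M.+1) c d ->
  exists p, KK g h p /\ @cellset R M c p /\ @cellset R M (nb c d) p.
Proof.
move=> okg okh; have N0 : (0 < M.+1)%N by [].
have ptin : forall k, (k <= M.+1)%N -> pt R M.+1 k \in `[0, 1].
  by move=> k; exact: pt_in.
case: c => [[i Hi] [j Hj]]; case: d => [[] []];
  rewrite /valid /exd /chg /nb /= => /andP [ex ch].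
- have [t t01 ht] := vert_edge N0 okg okh (leqW ex) Hj ch.
  exists (pt R M.+1 i.+1, t); rewrite /cellset /KK /= inordK //=.
  have tin := seg_in Hj t01; move: t01; rewrite in_itv /= => /andP [t1 t2].
  rewrite lexx !pt_le // t1 t2 ptin //.
- have ip : (0 < i)%N by [].
  have [t t01 ht] := vert_edge N0 okg okh (ltnW Hi) Hj ch.
  exists (pt R M.+1 i, t); rewrite /cellset /KK /= inordK ?prednK //=; last first.
    exact: ltnW.
  have le1 : pt R M.+1 i.-1 <= pt R M.+1 i by rewrite -{2}(prednK ip) pt_le.
  have tin := seg_in Hj t01; move: t01; rewrite in_itv /= => /andP [t1 t2].
  by rewrite (lexx (pt R M.+1 i)) le1 !pt_le // t1 t2 ptin // ltnW.
- have [s s01 hs] := horiz_edge N0 okg okh Hi (leqW ex) ch.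
  exists (s, pt R M.+1 j.+1); rewrite /cellset /KK /= inordK //=.
  have sin := seg_in Hi s01; move: s01; rewrite in_itv /= => /andP [s1 s2].
  by rewrite (lexx (pt R M.+1 j.+1)) !pt_le // s1 s2 ptin.
- have jp : (0 < j)%N by [].
  have [s s01 hs] := horiz_edge N0 okg okh Hi (ltnW Hj) ch.
  exists (s, pt R M.+1 j); rewrite /cellset /KK /= inordK ?prednK //=; last first.
    exact: ltnW.
  have le1 : pt R M.+1 j.-1 <= pt R M.+1 j by rewrite -{2}(prednK jp) pt_le.
  have sin := seg_in Hi s01; move: s01; rewrite in_itv /= => /andP [s1 s2].
  by rewrite (lexx (pt R M.+1 j)) le1 !pt_le // s1 s2 ptin // ltnW.
Qed.

Lemma ballRR (R : realType) (x y : R * R) e :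
  `|x.1 - y.1| < e -> `|x.2 - y.2| < e -> ball x e y.
Proof. by move=> a b; split. Qed.

Lemma cell_ball (R : realType) M (c : cell M) (w z : R * R) e :
  1 / M.+1%:R < e -> @cellset R M c w -> @cellset R M c z -> ball w e z.
Proof.
move=> de [/andP [w1 w2] /andP [w3 w4]] [/andP [z1 z2] /andP [z3 z4]].
move: w2 z2 w4 z4; rewrite !ptS // => w2 z2 w4 z4.
move: de w2 z2 w4 z4; move: (1 / M.+1%:R) => d de w2 z2 w4 z4.
by apply: ballRR; rewrite ltr_norml; apply/andP; split; lra.
Qed.

Lemma grid_reach (R : realType) (g h : R -> R) (e : R) :
  fn_ok g -> fn_ok h -> 0 < e -> reach (KK g h) e (0, 0) (1, 1).
Proof.
move=> okg okh e0.
pose M := Num.truncn (e^-1).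
have de : 1 / M.+1%:R < e.
  have := truncnS_gt (e^-1); rewrite -/M => lt.
  rewrite -(ltr_pM2l e0) mulfV ?gt_eqF // in lt.
  by rewrite ltr_pdivrMr ?ltr0n.
have conn := grid_connect (@sgf_ok R g h M okg okh).
move/connectP: conn => [p pth lst].
suff : forall (c : cell M) p, path (@Erel (@sgf R g h M.+1) M) c p ->
    (forall z, KK g h z -> @cellset R M c z -> reach (KK g h) e (0, 0) z) ->
    forall z, KK g h z -> @cellset R M (last c p) z -> reach (KK g h) e (0, 0) z.
  move=> /(_ _ p pth) H; apply: H.
  - move=> z Kz cz; apply: reachS (reach0 _ _ _) Kz _.
    apply: cell_ball de _ cz; rewrite /cellset /= pt0 lexx /=.
    by split; rewrite /pt divr_ge0 ?ler0n.
  - case: okg okh => [_ _ _ g1] [_ _ _ h1].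
    by rewrite /KK /= g1 h1 in_itv /= ler01 lexx.
  - rewrite -lst /cellset /= ptN // lexx andbT.
    have := pt_in R (ltn0Sn M) (leqnSn M); rewrite in_itv /= => /andP [_ ->].
    by [].
move=> c q; elim: q c => [|c' q IH] c //= /andP [/existsP [d /andP [v /eqP nbd]] pq] Hc.
apply: IH pq _ => z Kz cz.
have [w [Kw [cw cw']]] := valid_pt okg okh v.
apply: reachS (Hc w Kw cw) Kz _.
by apply: cell_ball de _ cz; rewrite -nbd.
Qed.
Lemma cont_eps (R : realType) (g : R -> R) x eps : {within `[0, 1], continuous g} ->
  x \in `[0, 1] -> 0 < eps ->
  exists2 r, 0 < r & forall y, y \in `[0, 1] -> `|x - y| < r -> `|g x - g y| < eps.
Proof.
move=> cg x01 ep.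
have := (subspace_continuousP _ _).1 cg x x01.
move=> /cvgrPdist_lt /(_ _ ep).
rewrite /within => /nbhs_ballP [r /= r0 H].
exists r => // y y01 xy; apply: (H y) => //.
Qed.
Lemma KK_closed (R : realType) (g h : R -> R) :
  {within `[0, 1], continuous g} -> {within `[0, 1], continuous h} ->
  closed (KK g h).
Proof.
move=> cg ch z clz.
have cl01 : closed (`[0, 1] : set R).
  apply: compact_closed; [exact: Rhausdorff | exact: segment_compact].
have z1 : z.1 \in `[0, 1].
  apply: cl01 => B nB.
  have nB' : nbhs z (B `*` setT).
    by exists (B, setT) => //; split => //; exact: filterT.
  have [p [[p1 _] [Bp _]]] := clz _ nB'.
  by exists p.1; split.
have z2 : z.2 \in `[0, 1].
  apply: cl01 => B nB.
  have nB' : nbhs z (setT `*` B).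
    by exists (setT, B) => //; split => //; exact: filterT.
  have [p [[_ [p2 _]] [_ Bp]]] := clz _ nB'.
  by exists p.2; split.
split=> //; split=> //.
apply: contrapT => /eqP ne.
have dp : 0 < `|g z.1 - h z.2| by rewrite normr_gt0 subr_eq0.
set d := `|g z.1 - h z.2| in dp.
have d2 : 0 < d / 2 by rewrite divr_gt0.
have [r1 r10 H1] := cont_eps cg z1 d2.
have [r2 r20 H2] := cont_eps ch z2 d2.
have r0 : 0 < Order.min r1 r2 by rewrite lt_min r10 r20.
have [p [[p1 [p2 gp]] [b1 b2]]] := clz _ (nbhsx_ballx z _ r0).
have q1 : `|g z.1 - g p.1| < d / 2.
  by apply: H1 p1 (lt_le_trans b1 _); rewrite ge_min lexx.
have q2 : `|h z.2 - h p.2| < d / 2.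
  by apply: H2 p2 (lt_le_trans b2 _); rewrite ge_min lexx orbT.
have : d <= `|g z.1 - g p.1| + `|h z.2 - h p.2|.
  rewrite /d (distrC (h z.2)); have -> : g z.1 - h z.2 = (g z.1 - g p.1) + (h p.2 - h z.2).
    by rewrite gp addrA subrK.
  exact: ler_normD.
lra.
Qed.

Lemma KK_compact (R : realType) (g h : R -> R) :
  {within `[0, 1], continuous g} -> {within `[0, 1], continuous h} ->
  compact (KK g h).
Proof.
move=> cg ch; apply: (subclosed_compact (KK_closed cg ch)).
  exact: (compact_setX (@segment_compact R 0 1) (@segment_compact R 0 1)).
by move=> p [p1 [p2 _]]; split.
Qed.

Lemma within_slice (R : realType) (f : bool * R -> R) (b : bool) :
  {within @IU R, continuous f} -> {within `[0, 1], continuous (fun s => f (b, s))}.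
Proof.
move=> cf; apply/subspace_continuousP => x x01.
have := (subspace_continuousP _ _).1 cf (b, x) x01.
move=> H A nA; have := H A nA.
rewrite /within /= => -[[P1 P2] [nP1 nP2] sP].
apply: filterS nP2 => y P2y y01.
apply: (sP (b, y)) => //; split=> //; exact: nbhs_singleton.
Qed.

Unset Implicit Arguments.

Theorem lemma1 (R : realType) (f : bool * R -> R) :
  {within @IU R, continuous f} ->
  (forall p, @IU R p -> f p \in `[0, 1]%R) ->
  f (false, 0) = 0 -> f (true, 0) = 0 ->
  f (false, 1) = 1 -> f (true, 1) = 1 ->
  connected_component (Sigma f) ((false, 0), (true, 0)) ((false, 1), (true, 1)).
Proof.
move=> cf rf f00 f10 f01 f11.
pose g := fun s => f (false, s); pose h := fun s => f (true, s).
have cg : {within `[0, 1], continuous g} by exact: within_slice.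
have ch : {within `[0, 1], continuous h} by exact: within_slice.
have okg : fn_ok g by split => // s s01; exact: rf.
have okh : fn_ok h by split => // s s01; exact: rf.
have in01 : forall x : R, x = 0 \/ x = 1 -> x \in `[0, 1].
  by move=> x [->|->]; rewrite in_itv /= ?lexx ?ler01.
have cc : connected_component (KK g h) (0, 0) (1, 1).
  apply: reach_component.
  - exact: KK_closed.
  - exact: KK_compact.
  - split; first by apply: in01; left.
    split; first by apply: in01; left.
    by rewrite /g /h /= f00 f10.
  - by move=> e e0; exact: grid_reach okg okh e0.
case: cc => C [C0 CK cC] C1.
pose phi := fun p : R * R => ((false, p.1), (true, p.2)).
exists (phi @` C); last by exists (1, 1).
split; first by exists (0, 0).
  move=> _ [p Cp <-]; have [p1 [p2 gp]] := CK p Cp.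
  by split=> //; split=> //; split.
apply: connected_continuous_connected cC _.
apply: continuous_subspaceT => p.
apply: (@cvg_pair _ _ _ _ (nbhs (false, p.1)) (nbhs (true, p.2))).
- apply: (@cvg_pair _ _ _ _ (nbhs false) (nbhs p.1)).
  + exact: cvg_cst.
  + exact: (@cvg_fst _ _ (nbhs p.1) (nbhs p.2) _).
- apply: (@cvg_pair _ _ _ _ (nbhs true) (nbhs p.2)).
  + exact: cvg_cst.
  + exact: (@cvg_snd _ _ (nbhs p.1) (nbhs p.2) _).
Qed.
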